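(* Let $K$ be a field, let $A$ be a finitely generated $K$-algebra that is a (right and left) Goldie domain, with quotient division algebra $Q(A)$, and let $E$ be a division subalgebra of $Q(A)$. If $Q(A)$ is infinite dimensional as a right $E$-vector space, then $AE$ is infinite dimensional as a right $E$-vector space.
   Context: $AE$ denotes the right $E$-subspace of $Q(A)$ consisting of finite sums $\sum a_ie_i$ with $a_i\in A$, $e_i\in E$. A Goldie domain has a classical (Ore) quotient division algebra $Q(A)$, in which every finite set of elements has a common left denominator from $A$. *)

(* Defs.v *)
From HB Require Import structures.
From mathcomp Require Import all_boot all_order all_algebra.
Set Implicit Arguments. Unset Strict Implicit. Unset Printing Implicit Defensive.
Import GRing.Theory.
Local Open Scope ring_scope.

Section Defs.
Variables (K : fieldType) (Q : unitAlgType K).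

(* Q is a division ring: every nonzero element is invertible (Q is nontrivial
   since unitRingType is a nonzero ring). *)
Definition is_division_ring : Prop := forall x : Q, x != 0 -> x \is a GRing.unit.

Definition is_subalg (B : Q -> Prop) : Prop :=
  [/\ B 1,
      (forall x y, B x -> B y -> B (x + y)),
      (forall x y, B x -> B y -> B (x * y)) &
      (forall (k : K) x, B x -> B (k *: x))].

Definition fg_subalg (A : Q -> Prop) : Prop :=
  exists s : seq Q,
    [/\ is_subalg A,
        (forall x, x \in s -> A x) &
        (forall B, is_subalg B -> (forall x, x \in s -> B x) -> forall x, A x -> B x)].

(* Q is the classical (left and right Ore) quotient division ring of A:
   every element is a left fraction a^-1 b and a right fraction b a^-1. *)
Definition classical_quotient (A : Q -> Prop) : Prop :=
  (forall q : Q, exists a b, [/\ A a, A b, a != 0 & q = a^-1 * b]) /\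
  (forall q : Q, exists a b, [/\ A a, A b, a != 0 & q = b * a^-1]).

Definition division_subalg (E : Q -> Prop) : Prop :=
  is_subalg E /\ (forall x, E x -> x != 0 -> E x^-1).

Definition AE_set (A E : Q -> Prop) (x : Q) : Prop :=
  exists n (a e : 'I_n -> Q),
    [/\ (forall i, A (a i)), (forall i, E (e i)) & x = \sum_(i < n) a i * e i].

Definition rfree (E : Q -> Prop) n (v : 'I_n -> Q) : Prop :=
  forall e : 'I_n -> Q, (forall i, E (e i)) ->
    \sum_(i < n) v i * e i = 0 -> forall i, e i = 0.

(* S has infinite dimension as a right E-vector space: it contains right
   E-linearly independent families of every finite size. *)
Definition inf_rdim (E S : Q -> Prop) : Prop :=
  forall n, exists v : 'I_n -> Q, (forall i, S (v i)) /\ rfree E v.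

End Defs.

(* Main.v *)
Require Import Defs.
From mathcomp Require Import all_boot all_order all_algebra.
Local Open Scope ring_scope.
Import GRing.Theory.

Theorem mainTheorem5 (K : fieldType) (Q : unitAlgType K) (A E : Q -> Prop) :
  is_division_ring Q ->
  fg_subalg A ->
  classical_quotient A ->
  division_subalg E ->
  inf_rdim E (fun _ => True) ->
  inf_rdim E (AE_set A E).
Proof.
move=> hdiv [s [[A1 AD AM AZ] _ _]] [hl _] [[E1 _ _ _] _] hinf n.
have [v [_ vfree]] := hinf n.
have key : forall m, (m <= n)%N -> exists c, [/\ A c, c != 0 &
    forall i : 'I_n, (i < m)%N -> A (c * v i)].
  elim=> [|m IH] hm.
    by exists 1; split => //; rewrite oner_neq0.
  have [d [Ad dn0 hd]] := IH (ltnW hm).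
  have [a [b [Aa Ab an0 ev]]] := hl (v (Ordinal hm)).
  have [x [y [Ax Ay xn0 exy]]] := hl (d * a^-1).
  have ux := hdiv _ xn0; have ud := hdiv _ dn0; have ua := hdiv _ an0.
  have xdya : x * d = y * a.
    by rewrite -[y](mulVKr ux) -exy -mulrA mulrVK.
  exists (x * d); split.
  - exact: AM.
  - apply/negP => /eqP h.
    have : x^-1 * (x * d) = 0 by rewrite h mulr0.
    by rewrite mulKr //; apply/eqP.
  - move=> i; rewrite ltnS leq_eqVlt => /orP [/eqP ei|lti].
      have -> : i = Ordinal hm by apply: val_inj.
      by rewrite ev xdya -mulrA mulVKr //; apply: AM.
    by rewrite -mulrA; apply: AM => //; apply: hd.
have [c [Ac cn0 hc]] := key n (leqnn n).
have uc := hdiv _ cn0.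
exists (fun i => c * v i); split.
  move=> i; exists 1%N, (fun _ => c * v i), (fun _ => 1); split.
  - by move=> _; apply: hc.
  - by [].
  by rewrite big_ord_recl big_ord0 mulr1 addr0.
move=> e he hs i; apply: (vfree e he) => //.
have : c^-1 * (\sum_(i < n) c * v i * e i) = 0 by rewrite hs mulr0.
rewrite mulr_sumr; under eq_bigr => j _ do rewrite -mulrA mulKr //.
by [].
Qed.
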